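(* Let $\mathcal{X}$ be a nonempty finite set and let $k$ be a strong kernel on $\mathcal{X}$. Then the image of $k$ has at most $2|\mathcal{X}|-1$ elements, i.e. $|\{k(x,y): x,y\in\mathcal{X}\}|\le 2|\mathcal{X}|-1$.
   Context: A strong kernel on a set $\mathcal{X}$ is a symmetric function $k:\mathcal{X}\times\mathcal{X}\to\mathbb{R}_{\ge 0}$ such that $k(x,y)\ge\min\{k(x,z),k(z,y)\}$ for all $x,y,z\in\mathcal{X}$. *)

(* Defs.v *)
(* Values of the kernel live in an arbitrary real field R
   (the paper uses the reals; the statement is purely order-theoretic). *)
From mathcomp Require Import all_boot all_order all_algebra.
Set Implicit Arguments. Unset Strict Implicit. Unset Printing Implicit Defensive.
Import Order.TTheory GRing.Theory Num.Theory.
Local Open Scope ring_scope.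

Definition strong_kernel (R : realFieldType) (X : Type) (k : X -> X -> R) : Prop :=
  [/\ (forall x y, k x y = k y x),
      (forall x y, 0 <= k x y) &
      (forall x y z, Num.min (k x z) (k z y) <= k x y)].

Definition kernel_image (R : realFieldType) (X : finType) (k : X -> X -> R) : seq R :=
  undup [seq k x y | x <- enum X, y <- enum X].

(* Main.v *)
Require Import Defs.
From mathcomp Require Import all_boot all_order all_algebra.
From mathcomp Require Import zify.
Import Order.TTheory GRing.Theory Num.Theory.

Section Aux.
Local Open Scope ring_scope.
Variables (R : realFieldType) (X : finType) (k : X -> X -> R).
Hypothesis hk : strong_kernel k.

Definition img (S : {set X}) : seq R :=
  undup [seq k x y | x <- enum S, y <- enum S].

Lemma imgP (S : {set X}) v : reflect (exists x y, [/\ x \in S, y \in S & v = k x y]) (v \in img S).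
Proof.
rewrite mem_undup; apply: (iffP allpairsPdep).
  by move=> [x [y [hx hy ->]]]; exists x, y; move: hx hy; rewrite !mem_enum.
by move=> [x [y [hx hy ->]]]; exists x, y; rewrite !mem_enum.
Qed.

Lemma img_bound n (S : {set X}) : #|S| = n.+1 -> (size (img S) <= (2 * #|S|).-1)%N.
Proof.
case: hk => ksym kpos ktri.
elim/ltn_ind: n S => n IH S hS.
have [n0|n_gt0] := posnP n.
  subst n; have /cards1P [x0 Sx] : #|S| == 1%N by rewrite hS.
  rewrite hS; apply: (@leq_trans (size [:: k x0 x0])); last by [].
  apply: uniq_leq_size; first exact: undup_uniq.
  move=> v /imgP [x [y [hx hy ->]]]; move: hx hy; rewrite Sx !inE => /eqP-> /eqP->.
  by [].

have [p0 Pp0] : exists p : X * X, [&& p.1 \in S, p.2 \in S & p.1 != p.2].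
  have : (1 < #|S|)%N by rewrite hS.
  case/card_gt1P => x [y [hx hy hxy]]; exists (x, y); by rewrite /= hx hy hxy.
pose P := fun p : X * X => [&& p.1 \in S, p.2 \in S & p.1 != p.2].
case: (@arg_minP _ R (X * X)%type p0 P (fun p => k p.1 p.2) Pp0).
move=> [x0 y0] /and3P [/= hx0 hy0 hxy0] hmin.
set m := k x0 y0.
have hmin' : forall x y, x \in S -> y \in S -> x != y -> m <= k x y.
  by move=> x y hx hy hxy; apply: (hmin (x, y)); rewrite /P /= hx hy hxy.
pose A := [set x in S | (x == x0) || (m < k x0 x)].
pose B := S :\: A.
have AS : A \subset S by apply/subsetP => x; rewrite inE => /andP[].
have hA0 : x0 \in A by rewrite inE hx0 eqxx.
have hB0 : y0 \in B by rewrite !inE hy0 andbT negb_and negb_or eq_sym hxy0 ltxx orbT.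
have cross : forall x y, x \in A -> y \in B -> k x y = m.
  move=> x y hx hy.
  have hxS : x \in S by move: hx; rewrite inE => /andP[].
  move: hy; rewrite !inE => /andP [hyA hyS].
  move: hyA; rewrite hyS /= negb_or => /andP [hyx0 hyk].
  apply/eqP; rewrite eq_le; apply/andP; split; last first.
    apply: hmin' => //; apply/eqP => exy; subst y.
    by move: hx; rewrite inE (negbTE hyx0) (negbTE hyk) andbF.
  rewrite leNgt; apply/negP => hlt.
  move: hx; rewrite inE hxS /= => /orP [/eqP exx0|hk0].
    by subst x; rewrite hlt in hyk.
  have := ktri x0 y x; rewrite (ksym x y) => hle.
  move: hyk; rewrite ltNge negbK => hyk.
  have : m < Num.min (k x0 x) (k y x) by rewrite lt_min hk0 -(ksym x y) hlt.
  by move=> h; have := le_lt_trans hyk (lt_le_trans h hle); rewrite ltxx.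
have cardA : (0 < #|A|)%N by apply/card_gt0P; exists x0.
have cardB : (0 < #|B|)%N by apply/card_gt0P; exists y0.
have cardAB : #|A| + #|B| = #|S|.
  rewrite /B cardsD (setIidPr AS); have := subset_leq_card AS; lia.
have IHA : (size (img A) <= (2 * #|A|).-1)%N.
  apply: (IH (#|A|.-1)); last by rewrite prednK.
  by move: cardAB; rewrite hS; lia.
have IHB : (size (img B) <= (2 * #|B|).-1)%N.
  apply: (IH (#|B|.-1)); last by rewrite prednK.
  by move: cardAB; rewrite hS; lia.
apply: (@leq_trans (size (m :: img A ++ img B))); last first.
  by rewrite /= size_cat -cardAB; lia.
apply: uniq_leq_size; first exact: undup_uniq.
move=> v /imgP [x [y [hx hy ->]]].
rewrite inE mem_cat.
have hxAB : (x \in A) || (x \in B) by rewrite /B in_setD hx andbT; case: (x \in A).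
have hyAB : (y \in A) || (y \in B) by rewrite /B in_setD hy andbT; case: (y \in A).
case/orP: hxAB => hxA; case/orP: hyAB => hyA.
- by apply/orP; right; apply/orP; left; apply/imgP; exists x, y.
- by rewrite (cross x y hxA hyA) eqxx.
- by rewrite ksym (cross y x hyA hxA) eqxx.
- by apply/orP; right; apply/orP; right; apply/imgP; exists x, y.
Qed.
End Aux.

Theorem mainTheorem4 (R : realFieldType) (X : finType) (k : X -> X -> R) :
  (0 < #|X|)%N -> strong_kernel k ->
  (size (kernel_image k) <= (2 * #|X|).-1)%N.
Proof.
move=> hX hk.
have hT : #|[set: X]| = (#|X|.-1).+1 by rewrite cardsT prednK.
have := @img_bound R X k hk _ _ hT; rewrite cardsT; apply: leq_trans.
apply: uniq_leq_size; first exact: undup_uniq.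
move=> v; rewrite mem_undup => /allpairsPdep [x [y [_ _ ->]]].
by apply/imgP; exists x, y; rewrite !inE.
Qed.
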